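(* Let $V_0\le V$ be finite-dimensional vector spaces, $E=(E,q)$ a formed space and $U\in\mathcal{P}^\omega(E)$. The actions of $\operatorname{GL}(V)$ on $\mathcal{P}(V)$, of $A^T(V,V_0)$ on $\mathcal{P}(V,V_0)$, of $G(E)$ on $\mathcal{P}^\omega(E)$, and of $A(E,U)$ on $\mathcal{P}^\omega(E,U)$ are all transitive on the elements of any given dimension.
   Context: $\mathcal{P}(V)$ is the poset of subspaces $0<W<V$; $\mathcal{P}(V,V_0)$ the poset of $W<V$ with $W+V_0=V$; $A^T(V,V_0)=\{g\in\operatorname{GL}(V): g(v)-v\in V_0\ \forall v\}$. Formed spaces over a field with involution $\sigma$ ($\bar c=\sigma(c)$), $\varepsilon$ ($\varepsilon\bar\varepsilon=1$), $\Lambda$ ($\{c-\varepsilon\bar c\}\le\Lambda\le\{c:c+\varepsilon\bar c=0\}$): forms are sesquilinear maps modulo those $f$ with $f(v,v)\in\Lambda$, $f(w,v)=-\varepsilon\overline{f(v,w)}$; $\omega_q(v,w)=q(v,w)+\varepsilon\overline{q(w,v)}$, $Q_q(v)=q(v,v)+\Lambda$; radical $R(E)=\{v:\omega_q(E,v)=0,Q_q(v)=0\}$; $U^\perp=\{v:\omega_q(v,U)=0\}$; isotropic means $\omega_q,Q_q$ vanish. $\mathcal{P}^\omega(E)$: isotropic $W$ with $R(E)<W<E$; $\mathcal{P}^\omega(E,U)$: those with also $W+U^\perp=E$. $G(E)$ is the group of bijective isometries, $A(E,U)$ its subgroup fixing $U$ pointwise. *)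

(* Defs.v *)
From HB Require Import structures.
From mathcomp Require Import all_boot all_order all_algebra.
Set Implicit Arguments. Unset Strict Implicit. Unset Printing Implicit Defensive.
Import GRing.Theory.
Local Open Scope ring_scope.

Section Defs.
Variable K : fieldType.

Section Linear.
Variable V : vectType K.

Definition GLmem (g : 'End(V)) : Prop := bijective g.

Definition PV (W : {vspace V}) : Prop := W != 0%VS /\ W != fullv.

Definition PVV0 (V0 W : {vspace V}) : Prop :=
  W != fullv /\ (W + V0)%VS = fullv.

Definition ATmem (V0 : {vspace V}) (g : 'End(V)) : Prop :=
  GLmem g /\ forall v : V, g v - v \in V0.
End Linear.

Section Formed.
Variables (sigma : {rmorphism K -> K}) (eps : K) (Lam : K -> Prop).

Definition form_param : Prop :=
  [/\ involutive sigma,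
      eps * sigma eps = 1,
      (Lam 0 /\ forall a b, Lam a -> Lam b -> Lam (a - b)),
      ((forall c, Lam (c - eps * sigma c)) /\
       (forall c, Lam c -> c + eps * sigma c = 0))
    & (forall a c, Lam c -> Lam (a * c * sigma a))].

Variable E : vectType K.

Definition sesquilinear (f : E -> E -> K) : Prop :=
  (forall a v v' w, f (a *: v + v') w = a * f v w + f v' w) /\
  (forall a v w w', f v (a *: w + w') = f v w * sigma a + f v w').

(* forms are sesquilinear maps modulo the trivial ones *)
Definition trivial_form (f : E -> E -> K) : Prop :=
  (forall v, Lam (f v v)) /\ (forall v w, f w v = - eps * sigma (f v w)).

Variable q : E -> E -> K.

Definition omega (v w : E) : K := q v w + eps * sigma (q w v).

(* Q_q(v) = 0 in K / Lam *)
Definition Qzero (v : E) : Prop := Lam (q v v).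

Definition in_rad (v : E) : Prop := (forall e, omega e v = 0) /\ Qzero v.

Definition in_perp (U : {vspace E}) (v : E) : Prop :=
  forall u, u \in U -> omega v u = 0.

Definition isotropic (W : {vspace E}) : Prop :=
  (forall v w, v \in W -> w \in W -> omega v w = 0) /\
  (forall v, v \in W -> Qzero v).

Definition Pw (W : {vspace E}) : Prop :=
  [/\ isotropic W,
      (forall v, in_rad v -> v \in W),
      (exists2 w, w \in W & ~ in_rad w)
    & W != fullv].

Definition PwU (U W : {vspace E}) : Prop :=
  Pw W /\ forall e : E, exists w u, [/\ w \in W, in_perp U u & e = w + u].

(* g is an isometry of (E,q): g^* q and q define the same form *)
Definition isometry (g : 'End(E)) : Prop :=
  trivial_form (fun v w => q (g v) (g w) - q v w).

Definition Gmem (g : 'End(E)) : Prop := bijective g /\ isometry g.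

Definition AEUmem (U : {vspace E}) (g : 'End(E)) : Prop :=
  Gmem g /\ forall u, u \in U -> g u = u.
End Formed.
End Defs.

(* Main.v *)
Require Import Defs.
From HB Require Import structures.
From mathcomp Require Import all_boot all_order all_algebra.
From mathcomp Require Import ring.
From Stdlib Require Classical_Prop.
Set Implicit Arguments. Unset Strict Implicit. Unset Printing Implicit Defensive.
Import GRing.Theory.
Local Open Scope ring_scope.

Section FormBasics.
Variable K : fieldType.
Variables (sigma : {rmorphism K -> K}) (eps : K) (Lam : K -> Prop).
Hypothesis fp : form_param sigma eps Lam.
Variable E : vectType K.
Variable q : E -> E -> K.
Hypothesis sq : sesquilinear sigma q.

Local Notation w := (omega sigma eps q).

Lemma sigK : involutive sigma. Proof. by case: fp. Qed.
Lemma epsK : eps * sigma eps = 1. Proof. by case: fp. Qed.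
Lemma Lam0 : Lam 0. Proof. by case: fp => _ _ []. Qed.
Lemma LamB a b : Lam a -> Lam b -> Lam (a - b). Proof. by case: fp => _ _ [_ h] _ _; apply: h. Qed.
Lemma LamN a : Lam a -> Lam (- a).
Proof. by move=> h; rewrite -sub0r; apply: LamB => //; apply: Lam0. Qed.
Lemma LamD a b : Lam a -> Lam b -> Lam (a + b).
Proof. by move=> ha hb; rewrite -[b]opprK; apply: LamB => //; apply: LamN. Qed.
Lemma Lam_tr c : Lam (c - eps * sigma c). Proof. by case: fp => _ _ _ [h _] _; apply: h. Qed.
Lemma Lam_sym c : Lam c -> c + eps * sigma c = 0. Proof. by case: fp => _ _ _ [_ h] _; apply: h. Qed.
Lemma LamM a c : Lam c -> Lam (a * c * sigma a). Proof. by case: fp => _ _ _ _ h; apply: h. Qed.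
Lemma Lam_eq a b : a = b -> Lam a -> Lam b. Proof. by move=> ->. Qed.

Lemma sigma_eps : sigma eps = eps^-1.
Proof.
have e0 : eps != 0 by apply/eqP => e0; move: epsK; rewrite e0 mul0r => /eqP; rewrite eq_sym oner_eq0.
by apply: (mulfI e0); rewrite epsK mulfV.
Qed.
Lemma eps_neq0 : eps != 0.
Proof. by apply/eqP => e0; move: epsK; rewrite e0 mul0r => /eqP; rewrite eq_sym oner_eq0. Qed.

Lemma qDl a v v' x : q (a *: v + v') x = a * q v x + q v' x. Proof. by case: sq => h _; apply: h. Qed.
Lemma qDr a v x x' : q v (a *: x + x') = q v x * sigma a + q v x'. Proof. by case: sq => _ h; apply: h. Qed.
Lemma q0l x : q 0 x = 0.
Proof. have h := qDl 1 0 0 x; rewrite scaler0 addr0 mul1r in h. by apply: (addrI (q 0 x)); rewrite addr0 -h. Qed.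
Lemma q0r x : q x 0 = 0.
Proof. have h := qDr 1 x 0 0; rewrite scaler0 addr0 rmorph1 mulr1 in h. by apply: (addrI (q x 0)); rewrite addr0 -h. Qed.
Lemma qAl v v' x : q (v + v') x = q v x + q v' x. Proof. by rewrite -[v]scale1r qDl mul1r scale1r. Qed.
Lemma qAr v x x' : q v (x + x') = q v x + q v x'. Proof. by rewrite -[x]scale1r qDr rmorph1 mulr1 scale1r. Qed.
Lemma qZl a v x : q (a *: v) x = a * q v x. Proof. by rewrite -[_ *: _]addr0 qDl q0l addr0. Qed.
Lemma qZr a v x : q v (a *: x) = q v x * sigma a. Proof. by rewrite -[_ *: _]addr0 qDr q0r addr0. Qed.
Lemma qNl v x : q (- v) x = - q v x. Proof. by rewrite -scaleN1r qZl mulN1r. Qed.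
Lemma qNr v x : q v (- x) = - q v x. Proof. by rewrite -scaleN1r qZr rmorphN1 mulrN1. Qed.
Lemma qBl v v' x : q (v - v') x = q v x - q v' x. Proof. by rewrite qAl qNl. Qed.
Lemma qBr v x x' : q v (x - x') = q v x - q v x'. Proof. by rewrite qAr qNr. Qed.

Lemma wAl v v' x : w (v + v') x = w v x + w v' x.
Proof. by rewrite /omega qAl qAr rmorphD; ring. Qed.
Lemma wAr v x x' : w v (x + x') = w v x + w v x'.
Proof. by rewrite /omega qAl qAr rmorphD; ring. Qed.
Lemma wZl a v x : w (a *: v) x = a * w v x.
Proof. by rewrite /omega qZl qZr rmorphM sigK; ring. Qed.
Lemma wZr a v x : w v (a *: x) = w v x * sigma a.
Proof. by rewrite /omega qZl qZr rmorphM; ring. Qed.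
Lemma w0l x : w 0 x = 0. Proof. by rewrite /omega q0l q0r rmorph0; ring. Qed.
Lemma w0r x : w x 0 = 0. Proof. by rewrite /omega q0l q0r rmorph0; ring. Qed.
Lemma wNl v x : w (- v) x = - w v x. Proof. by rewrite -scaleN1r wZl mulN1r. Qed.
Lemma wNr v x : w v (- x) = - w v x. Proof. by rewrite -scaleN1r wZr rmorphN1 mulrN1. Qed.
Lemma wBl v v' x : w (v - v') x = w v x - w v' x. Proof. by rewrite wAl wNl. Qed.
Lemma wBr v x x' : w v (x - x') = w v x - w v x'. Proof. by rewrite wAr wNr. Qed.

Lemma wC v x : w v x = eps * sigma (w x v).
Proof.
rewrite /omega rmorphD rmorphM sigK mulrDr mulrA epsK mul1r; ring.
Qed.
Lemma wC0 v x : w v x = 0 -> w x v = 0.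
Proof. by move=> h; rewrite wC h rmorph0 mulr0. Qed.

Lemma q_cross v x : Lam (q v x + q x v - w v x).
Proof.
apply: Lam_eq (Lam_tr (q x v)); rewrite /omega; ring.
Qed.

Lemma Lam_w0 v : Lam (q v v) -> w v v = 0.
Proof. by move=> h; rewrite /omega; apply: Lam_sym. Qed.

Lemma isometryP (g : 'End(E)) :
  (forall v x, w (g v) (g x) = w v x) -> (forall v, Lam (q (g v) (g v) - q v v)) ->
  Defs.isometry sigma eps Lam q g.
Proof.
move=> hw hq; split => // v x.
have := hw x v; rewrite /omega => /eqP; rewrite -subr_eq0 => /eqP h.
rewrite rmorphB; apply/eqP; rewrite -subr_eq0; apply/eqP; rewrite -h; ring.
Qed.

Lemma isometry_w (g : 'End(E)) : Defs.isometry sigma eps Lam q g -> forall v x, w (g v) (g x) = w v x.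
Proof.
case=> _ h v x; have e := h x v.
rewrite /omega; apply/eqP; rewrite -subr_eq0; apply/eqP.
transitivity ((q (g v) (g x) - q v x) + eps * sigma (q (g x) (g v) - q x v)).
  by rewrite rmorphB; ring.
by rewrite e; ring.
Qed.

Lemma isometry_q (g : 'End(E)) : Defs.isometry sigma eps Lam q g -> forall v, Lam (q (g v) (g v) - q v v).
Proof. by case. Qed.

Lemma w_sumr v I (r : seq I) (P : pred I) (F : I -> E) :
  w v (\sum_(i <- r | P i) F i) = \sum_(i <- r | P i) w v (F i).
Proof. exact: (big_morph (w v) (wAr v) (w0r v)). Qed.
Lemma w_suml x I (r : seq I) (P : pred I) (F : I -> E) :
  w (\sum_(i <- r | P i) F i) x = \sum_(i <- r | P i) w (F i) x.
Proof. exact: (big_morph (w^~ x) (fun a b => wAl a b x) (w0l x)). Qed.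

Definition Phi (S : seq E) (v : E) : 'rV[K]_(size S) := \row_(i < size S) w v (nth 0 S i).
Lemma Phi_linear S : linear (Phi S).
Proof. by move=> a u v; apply/rowP => i; rewrite !mxE wAl wZl. Qed.
HB.instance Definition _ S := GRing.isLinear.Build K E 'rV_(size S) _ (Phi S) (Phi_linear S).

Definition PhiL S : 'Hom(E, 'rV[K]_(size S)) := linfun (Phi S).
Lemma PhiLE S v : PhiL S v = Phi S v. Proof. exact: lfunE. Qed.

Definition perpv S : {vspace E} := lker (PhiL S).

Lemma perpvP S v : reflect (forall s, s \in <<S>>%VS -> w v s = 0) (v \in perpv S).
Proof.
apply: (iffP idP).
  rewrite /perpv memv_ker PhiLE => /eqP h s; rewrite -[S]in_tupleE => /coord_span ->.
  rewrite w_sumr big1 // => i _; rewrite wZr.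
  have := congr1 (fun M : 'rV[K]_(size S) => M 0 i) h; rewrite !mxE => ->; by rewrite mul0r.
move=> h; rewrite /perpv memv_ker PhiLE; apply/eqP/rowP => i; rewrite !mxE.
by apply: h; apply: memv_span; apply: mem_nth.
Qed.

Definition Pv : {vspace E} := perpv (vbasis fullv).
Lemma PvP v : reflect (forall e, w v e = 0) (v \in Pv).
Proof.
apply: (iffP (perpvP _ _)) => h e //; apply: h.
by rewrite (span_basis (vbasisP fullv)) memvf.
Qed.
Lemma PvP' v : reflect (forall e, w e v = 0) (v \in Pv).
Proof.
apply: (iffP (PvP v)) => h e; apply: wC0; exact: h.
Qed.
Lemma perp_factor S x : (forall v, v \in perpv S -> w v x = 0) -> x \in (<<S>> + Pv)%VS.
Proof.
move=> h; set F := PhiL S.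
pose lam (r : 'rV[K]_(size S)) := w ((F^-1)%VF r) x.
have key v : w v x = lam (F v).
  have hv : v - (F^-1)%VF (F v) \in perpv S.
    rewrite /perpv memv_ker linearB /= limg_lfunVK ?subrr //.
    exact: memv_img (memvf v).
  by rewrite /lam -[v in LHS](subrK ((F^-1)%VF (F v))) wAl (h _ hv) add0r.
pose c i := lam (delta_mx 0 i).
have lam_lin r : lam r = \sum_i r 0 i * c i.
  rewrite /lam {1}[r]row_sum_delta linear_sum /= w_suml; apply: eq_bigr => i _.
  by rewrite linearZ /= wZl.
set y := \sum_(i < size S) sigma (c i) *: nth 0 S i.
have hy : y \in <<S>>%VS.
  by apply: memv_suml => i _; apply: memvZ; apply: memv_span; apply: mem_nth.
have hxy : x - y \in Pv.
  apply/PvP' => v; rewrite wBr key lam_lin w_sumr; apply/eqP; rewrite subr_eq0; apply/eqP.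
  apply: eq_bigr => i _; rewrite wZr sigK /F PhiLE !mxE //.
by rewrite -(subrK y x) addrC; apply: memv_add.
Qed.
Lemma inj_bij (f : 'End(E)) : injective f -> bijective f.
Proof.
move=> /lker0P k; exists (f^-1)%VF; [exact: lker0_lfunK | exact: lker0_lfunVK].
Qed.
Lemma inj0_bij (f : 'End(E)) : (forall v, f v = 0 -> v = 0) -> bijective f.
Proof.
move=> h; apply: inj_bij; apply/lker0P; apply/eqP/vspaceP => v.
rewrite memv_ker memv0; apply/eqP/eqP => [/h|->] //; by rewrite linear0.
Qed.

Definition Giso (g : 'End(E)) := bijective g /\ Defs.isometry sigma eps Lam q g.

Lemma Giso_comp g h : Giso g -> Giso h -> Giso (g \o h)%VF.
Proof.
move=> [bg ig] [bh ih]; split.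
  by apply: (eq_bij (bij_comp bg bh)) => v; rewrite comp_lfunE.
apply: isometryP => [v x|v]; rewrite !comp_lfunE.
  by rewrite !isometry_w.
apply: Lam_eq (LamD (isometry_q ig (h v)) (isometry_q ih v)); ring.
Qed.

Lemma Giso1 : Giso (\1%VF : 'End(E)).
Proof.
split; first by apply: inj_bij => v x; rewrite !id_lfunE.
apply: isometryP => [v x|v]; rewrite !id_lfunE //; rewrite subrr; exact: Lam0.
Qed.

Definition rk1f (a b : E) (v : E) := w v a *: b.
Lemma rk1f_lin a b : linear (rk1f a b).
Proof. by move=> c v x; rewrite /rk1f wAl wZl scalerDl scalerA. Qed.
HB.instance Definition _ a b := GRing.isLinear.Build K E E _ (rk1f a b) (rk1f_lin a b).
Definition rk1 a b : 'End(E) := linfun (rk1f a b).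
Lemma rk1E a b v : rk1 a b v = w v a *: b. Proof. by rewrite lfunE. Qed.

Definition reflL u g : 'End(E) := \1%VF - g^-1 *: rk1 u u.
Lemma reflLE u g v : reflL u g v = v - (w v u * g^-1) *: u.
Proof. by rewrite add_lfunE opp_lfunE scale_lfunE id_lfunE rk1E scalerA mulrC. Qed.
Lemma refl_Giso u g : g != 0 -> Lam (q u u - g) -> Giso (reflL u g).
Proof.
move=> g0 hL.
have hw : w u u = g + eps * sigma g.
  have := Lam_sym hL; rewrite rmorphB /omega => e.
  apply/eqP; rewrite -subr_eq0; apply/eqP; rewrite -e; ring.
have sg0 : sigma g != 0 by rewrite fmorph_eq0.
have e0 := eps_neq0.
split.
  apply: inj0_bij => v; rewrite reflLE => /eqP; rewrite subr_eq0 => /eqP hv.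
  set a := w v u * g^-1 in hv.
  have ha : a * g = w v u by rewrite /a mulfVK.
  clearbody a.
  have : a * (eps * sigma g) = 0.
    move: ha; rewrite [in RHS]hv wZl hw => e.
    by apply: (addrI (a * g)); rewrite addr0 -mulrDr -e.
  move/eqP; rewrite !mulf_eq0 (negbTE e0) (negbTE sg0) !orbF => /eqP a0.
  by rewrite hv a0 scale0r.
apply: isometryP => [v x|v]; rewrite !reflLE.
  rewrite wBl !wBr !wZl !wZr !rmorphM fmorphV (wC u x) hw.
  by field; rewrite sg0 g0.
set a := w v u * g^-1.
have ha : a * g = w v u by rewrite /a mulfVK.
clearbody a.
apply: (Lam_eq _ (LamD (LamN (Lam_tr (a * q u v))) (LamM a hL))).
apply/eqP; rewrite -subr_eq0; apply/eqP.
transitivity (sigma a * (w v u - a * g)); last by rewrite ha subrr mulr0.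
rewrite qBl !qBr !qZl !qZr /omega rmorphM; ring.
Qed.
Lemma sig_w a b : sigma (w a b) = eps^-1 * w b a.
Proof. by rewrite (wC b a) mulrA mulVf ?mul1r // eps_neq0. Qed.

Definition eichL u c k : 'End(E) := \1%VF + k *: rk1 c u - (sigma (eps * k)) *: rk1 u c.
Lemma eichLE u c k v :
  eichL u c k v = v + (k * w v c) *: u - (sigma (eps * k) * w v u) *: c.
Proof.
by rewrite /eichL !add_lfunE opp_lfunE !scale_lfunE id_lfunE !rk1E !scalerA.
Qed.

Lemma eich_Giso u c k : Lam (q u u) -> Lam (q c c) -> w u c = 0 -> Giso (eichL u c k).
Proof.
move=> hu hc huc.
have hcu : w c u = 0 by apply: wC0.
have huu : w u u = 0 by apply: Lam_w0.
have hcc : w c c = 0 by apply: Lam_w0.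
have e0 := eps_neq0.
split.
  apply: inj0_bij => v; rewrite eichLE => /eqP; rewrite subr_eq0 => /eqP hv.
  have hv' : v = (sigma (eps * k) * w v u) *: c - (k * w v c) *: u.
    by rewrite -hv addrK.
  have hvc : w v c = 0.
    by rewrite {1}hv' wBl !wZl hcc huc !mulr0 subrr.
  have hvu : w v u = 0.
    by rewrite {1}hv' wBl !wZl hcu huu !mulr0 subrr.
  by rewrite hv' hvc hvu !mulr0 !scale0r subrr.
apply: isometryP => [v x|v]; rewrite !eichLE.
  rewrite !(wAl, wBl, wAr, wBr, wNl, wNr, wZl, wZr) huc hcu huu hcc.
  rewrite !(rmorphM, sigK) !sig_w sigma_eps.
  by field.
set U := (k * w v c) *: u; set C := (sigma (eps * k) * w v u) *: c.
have key : w U v - w C v - w U C = k * w v c * w u v - eps * sigma (k * w v c * w u v).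
  rewrite /U /C !(wZl, wZr) huc !(rmorphM, sigK) !sig_w sigma_eps; by field.
have L3 : Lam (q U U) by rewrite /U qZl qZr mulrA; apply: LamM.
have L4 : Lam (q C C) by rewrite /C qZl qZr mulrA; apply: LamM.
have L1 := q_cross U v; have L2 := q_cross C v; have L5 := q_cross U C.
apply: (Lam_eq _ (LamD (LamB (LamD (LamD (LamB L1 L2) L3) L4) L5) (Lam_tr (k * w v c * w u v)))).
rewrite -key !(qAl, qBl, qAr, qBr, qNl, qNr); ring.
Qed.
Lemma exists_perp (X0 : {vspace E}) x : x \notin (X0 + Pv)%VS ->
  exists a, (forall x0, x0 \in X0 -> w x0 a = 0) /\ w a x != 0.
Proof.
move=> hx; case: (Classical_Prop.classic (exists a, (forall x0, x0 \in X0 -> w x0 a = 0) /\ w a x != 0)) => // hn.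
exfalso; move/negP: hx; apply.
rewrite -{1}(span_basis (vbasisP X0)); apply: perp_factor => v hv.
apply/eqP; apply/negPn/negP => hne; apply: hn; exists v; split => // x0 hx0.
apply: wC0; move/perpvP: hv; apply; by rewrite (span_basis (vbasisP X0)).
Qed.

Definition fixes (h : 'End(E)) (X0 : {vspace E}) := forall x0, x0 \in X0 -> h x0 = x0.

Lemma step_refl (X0 : {vspace E}) x y :
  Lam (q x x) -> Lam (q y y) -> (forall x0, x0 \in X0 -> w x0 x = w x0 y) -> w x y != 0 ->
  exists h, [/\ Giso h, fixes h X0 & h x = y].
Proof.
move=> hx hy hX hxy; set u := y - x.
have hxx : w x x = 0 by apply: Lam_w0.
have hxu : w x u = w x y by rewrite /u wBr hxx subr0.
set g := - w x y.
have g0 : g != 0 by rewrite oppr_eq0.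
have hL : Lam (q u u - g).
  apply: (Lam_eq _ (LamN (LamB (LamB (Lam_tr (q y x)) hy) hx))).
  by rewrite /g /u !(qBl, qBr) /omega; ring.
exists (reflL u g); split; first exact: refl_Giso.
  move=> x0 hx0; rewrite reflLE /u wBr hX // subrr mul0r scale0r subr0 //.
rewrite reflLE hxu /g invrN mulrN mulfV // scaleN1r opprK /u addrC subrK //.
Qed.
Lemma wC0n v x : w v x != 0 -> w x v != 0.
Proof. by apply: contra => /eqP /wC0 ->. Qed.

Lemma step_via (X0 : {vspace E}) x y z :
  Lam (q x x) -> Lam (q y y) -> (forall x0, x0 \in X0 -> w x0 x = w x0 y) -> w x y = 0 ->
  (forall x0, x0 \in X0 -> w x0 z = 0) -> Lam (q (x + z) (x + z)) -> w x z != 0 -> w z y != 0 ->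
  exists h, [/\ Giso h, fixes h X0 & h x = y].
Proof.
move=> hx hy hX hxy hz hxz hxz0 hzy.
have hxx : w x x = 0 by apply: Lam_w0.
have [h1 [g1 f1 e1]] : exists h, [/\ Giso h, fixes h X0 & h x = x + z].
  apply: step_refl => //; first by move=> x0 hx0; rewrite wAr hz // addr0.
  by rewrite wAr hxx add0r.
have [h2 [g2 f2 e2]] : exists h, [/\ Giso h, fixes h X0 & h (x + z) = y].
  apply: step_refl => //; first by move=> x0 hx0; rewrite wAr hz // addr0 hX.
  by rewrite wAl hxy add0r.
exists (h2 \o h1)%VF; split; first exact: Giso_comp.
  by move=> x0 hx0; rewrite comp_lfunE f1 // f2.
by rewrite comp_lfunE e1 e2.
Qed.

Lemma SL (X0 : {vspace E}) x y :
  Lam (q x x) -> Lam (q y y) -> (forall x0, x0 \in X0 -> w x0 x = w x0 y) ->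
  x \notin (X0 + Pv)%VS -> y \notin (X0 + Pv)%VS ->
  exists h, [/\ Giso h, fixes h X0 & h x = y].
Proof.
move=> hx hy hX hxP hyP.
case: (eqVneq (w x y) 0) => hxy; last exact: step_refl.
have [a [ha hax]] := exists_perp hxP.
have [b [hb hby]] := exists_perp hyP.
have [c [hc hcx hcy]] : exists c, [/\ forall x0, x0 \in X0 -> w x0 c = 0, w c x != 0 & w c y != 0].
  case: (eqVneq (w a y) 0) => hay; last by exists a.
  case: (eqVneq (w b x) 0) => hbx; last by exists b.
  exists (a + b); split.
  - by move=> x0 hx0; rewrite wAr ha // hb // addr0.
  - by rewrite wAl hbx addr0.
  - by rewrite wAl hay add0r.
set u := y - x.
have hxx : w x x = 0 by apply: Lam_w0.
have hyy : w y y = 0 by apply: Lam_w0.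
have hyx : w y x = 0 by apply: wC0.
have hxu : w x u = 0 by rewrite /u wBr hxy hxx subrr.
have hux : w u x = 0 by rewrite /u wBl hyx hxx subrr.
have huy : w u y = 0 by rewrite /u wBl hyy hxy subrr.
have hX0u : forall x0, x0 \in X0 -> w x0 u = 0 by move=> x0 hx0; rewrite /u wBr hX // subrr.
have hxc : w x c != 0 by apply: wC0n.
have hLu : Lam (q u u).
  apply: (Lam_eq _ (LamB (LamD hy hx) (q_cross y x))).
  by rewrite /u !(qBl, qBr) hyx; ring.
have def_u : u = y - x by [].
clearbody u.
case: (eqVneq (w c u) 0) => hcu.
  case: (eqVneq (q c c) 0) => hqc.
    exists (eichL u c (w x c)^-1); split.
    - apply: eich_Giso => //; last by apply: wC0.
      by rewrite hqc; apply: Lam0.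
    - by move=> x0 hx0; rewrite eichLE (hc x0 hx0) (hX0u x0 hx0) !mulr0 !scale0r addr0 subr0.
    - by rewrite eichLE hxu mulr0 scale0r subr0 mulVf // scale1r def_u addrC subrK.
  set s := - w x c / q c c.
  have s0 : s != 0 by rewrite /s mulf_eq0 invr_eq0 oppr_eq0 (negbTE hxc) (negbTE hqc).
  apply: (@step_via X0 x y (s *: c)) => //.
  - by move=> x0 hx0; rewrite wZr hc // mul0r.
  - apply: (Lam_eq _ (LamD hx (q_cross x (s *: c)))).
    apply/eqP; rewrite -subr_eq0; apply/eqP.
    transitivity (- (sigma s * (w x c + s * q c c))).
      rewrite wZr !(qAl, qAr, qZl, qZr); ring.
    by rewrite /s; apply/eqP; rewrite oppr_eq0 mulf_eq0; apply/orP; right; apply/eqP; field.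
  - by rewrite wZr mulf_neq0 // fmorph_eq0.
  - by rewrite wZl mulf_neq0.
have huc : w u c != 0 by apply: wC0n.
set t := sigma (- (w x c + q c c) / w c u).
have ht : sigma t = - (w x c + q c c) / w c u by rewrite /t sigK.
set z := c + t *: u.
apply: (@step_via X0 x y z) => //.
- by move=> x0 hx0; rewrite /z wAr wZr hc // hX0u // mul0r addr0.
- apply: (Lam_eq _ (LamD (LamD (LamD hx (q_cross x z)) (q_cross c (t *: u))) (LamM t hLu))).
  apply/eqP; rewrite -subr_eq0; apply/eqP.
  transitivity (- (w x c + q c c + w c u * sigma t)).
    rewrite /z !(wAr, wZr) hxu !(qAl, qAr, qZl, qZr); ring.
  by rewrite ht; field.
- by rewrite /z wAr wZr hxu mul0r addr0.
- by rewrite /z wAl wZl huy mulr0 addr0.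
Qed.
Local Notation iso := (Defs.isotropic sigma eps Lam q).

Lemma iso_sub (A B : {vspace E}) : iso A -> (B <= A)%VS -> iso B.
Proof.
move=> [h1 h2] /subvP s; split => [v x hv hx|v hv]; [apply: h1 | apply: h2]; by apply: s.
Qed.

Lemma Giso_lker (h : 'End(E)) : Giso h -> lker h == 0%VS.
Proof. by move=> [bh _]; apply/lker0P; apply: bij_inj. Qed.

Lemma iso_img (h : 'End(E)) A : Giso h -> iso A -> iso (h @: A)%VS.
Proof.
move=> [bh ih] [h1 h2]; split.
  move=> v x /memv_imgP [a ha ->] /memv_imgP [b hb ->]; rewrite isometry_w //; exact: h1.
move=> v /memv_imgP [a ha ->]; rewrite /Qzero.
apply: (Lam_eq _ (LamD (isometry_q ih a) (h2 a ha))); ring.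
Qed.

Lemma Giso_Pv (h : 'End(E)) : Giso h -> (h @: Pv)%VS = Pv.
Proof.
move=> [[hi hK hK'] ih]; apply/vspaceP => v; apply/idP/idP.
  move=> /memv_imgP [p hp ->]; apply/PvP' => e.
  by rewrite -(hK' e) isometry_w //; move/PvP': hp; apply.
move=> hv; rewrite -(hK' v); apply: memv_img; apply/PvP' => e.
by rewrite -(isometry_w ih) hK'; move/PvP': hv; apply.
Qed.

Lemma fixes_limg (h : 'End(E)) Y0 : fixes h Y0 -> (h @: Y0)%VS = Y0.
Proof. by move=> hf; apply: fixedSpace_limg; apply/fixedSpacesP => v hv; apply: hf. Qed.

Lemma free_map (h : 'End(E)) X : lker h == 0%VS -> free X -> free (map h X).
Proof.
move=> hk; rewrite /free -limg_span size_map limg_dim_eq //.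
by rewrite (eqP hk) capv0.
Qed.

Lemma cap_step x X (Y Q : {vspace E}) :
  free (x :: X) -> (<<x :: X>> :&: (Y + Q) = 0)%VS -> (<<X>> :&: (Y + <[x]> + Q) = 0)%VS.
Proof.
rewrite free_cons => /andP [hx _] hc; apply/eqP; rewrite -subv0; apply/subvP => v.
rewrite memv_cap => /andP [hvX].
rewrite -addvA (addvC <[x]>%VS) addvA => /memv_addP [a ha [b /vlineP [k ->] def_v]].
rewrite def_v in hvX *.
have h0 : a \in (<<x :: X>> :&: (Y + Q))%VS.
  rewrite memv_cap ha andbT span_cons -(addrK (k *: x) a); apply: memvB.
    by rewrite addvC; apply: (subvP (addvSl _ _)).
  by apply: (subvP (addvSl _ _)); apply: memvZ; apply: memv_line.
move: h0; rewrite hc memv0 => /eqP ea.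
move: hvX; rewrite ea add0r memv0 => hkx.
case: (eqVneq k 0) => [->|k0]; first by rewrite scale0r.
by move: hx; rewrite -(scalerK k0 x) => /negP; case; apply: memvZ.
Qed.
Lemma ext_seq n : forall (xs ys : seq E) (Y0 : {vspace E}),
  size xs = n -> size ys = n -> iso <<xs>> -> iso <<ys>> ->
  (forall i, (i < size xs)%N -> forall y0, y0 \in Y0 -> w y0 (nth 0 xs i) = w y0 (nth 0 ys i)) ->
  free xs -> (<<xs>> :&: (Y0 + Pv) = 0)%VS ->
  free ys -> (<<ys>> :&: (Y0 + Pv) = 0)%VS ->
  exists h, [/\ Giso h, fixes h Y0 & map h xs = ys].
Proof.
elim: n => [|n IH] [|x xs] [|y ys] Y0 //= hsx hsy hisx hisy hc hfx hcx hfy hcy.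
  by exists \1%VF; split; [exact: Giso1 | by move=> ?; rewrite id_lfunE | done].
case: hsx => hsx; case: hsy => hsy.
have sub_x : (<<xs>> <= <<x :: xs>>)%VS by rewrite span_cons addvSr.
have sub_y : (<<ys>> <= <<y :: ys>>)%VS by rewrite span_cons addvSr.
have memx : x \in <<x :: xs>>%VS by rewrite span_cons; apply: (subvP (addvSl _ _)); apply: memv_line.
have memy : y \in <<y :: ys>>%VS by rewrite span_cons; apply: (subvP (addvSl _ _)); apply: memv_line.
have Lx : Lam (q x x) by apply: hisx.2.
have Ly : Lam (q y y) by apply: hisy.2.
have xnP : x \notin (Y0 + Pv)%VS.
  apply/negP => hxin.
  have : x \in (<<x :: xs>> :&: (Y0 + Pv))%VS by rewrite memv_cap memx hxin.
  rewrite hcx memv0 => /eqP x0; move: hfx; by rewrite free_cons x0 mem0v.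
have ynP : y \notin (Y0 + Pv)%VS.
  apply/negP => hyin.
  have : y \in (<<y :: ys>> :&: (Y0 + Pv))%VS by rewrite memv_cap memy hyin.
  rewrite hcy memv0 => /eqP y0; move: hfy; by rewrite free_cons y0 mem0v.
have [h1 [g1 f1 e1]] := SL Lx Ly (fun y0 hy0 => hc 0 isT y0 hy0) xnP ynP.
have hk1 := Giso_lker g1.
have [h2 [g2 f2 e2]] : exists h, [/\ Giso h, fixes h (Y0 + <[y]>)%VS & map h (map h1 xs) = ys].
  apply: (IH (map h1 xs) ys (Y0 + <[y]>)%VS).
  - by rewrite size_map.
  - done.
  - by rewrite -limg_span; apply: iso_img g1 (iso_sub hisx sub_x).
  - exact: iso_sub hisy sub_y.
  - move=> i; rewrite size_map => hi y0 /memv_addP [a ha [b /vlineP [k ->] ->]].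
    rewrite (nth_map 0) // !wAl !wZl.
    have hxi : nth 0 xs i \in <<x :: xs>>%VS by apply: memv_span; rewrite inE mem_nth ?orbT.
    have hyi : nth 0 ys i \in <<y :: ys>>%VS by apply: memv_span; rewrite inE mem_nth ?orbT // hsy -hsx.
    rewrite -{1}(f1 a ha) isometry_w; last by case: g1.
    rewrite -{1}e1 isometry_w; last by case: g1.
    rewrite (hisx.1 x _ memx hxi) (hisy.1 y _ memy hyi).
    by rewrite (hc i.+1 hi a ha).
  - apply: free_map => //; by move: hfx; rewrite free_cons => /andP [].
  - rewrite -limg_span.
    have -> : (Y0 + <[y]> + Pv)%VS = (h1 @: (Y0 + <[x]> + Pv))%VS.
      by rewrite !limgD fixes_limg // limg_line e1 Giso_Pv.
    by rewrite -lker0_img_cap // cap_step // limg0.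
  - by move: hfy; rewrite free_cons => /andP [].
  - exact: cap_step.
exists (h2 \o h1)%VF; split.
- exact: Giso_comp.
- by move=> y0 hy0; rewrite comp_lfunE f1 // f2 //; apply: (subvP (addvSl _ _)).
- rewrite comp_lfunE e1 f2; last by apply: (subvP (addvSr _ _)); apply: memv_line.
  by rewrite -e2 -map_comp; congr (_ :: _); apply: eq_map => v; rewrite comp_lfunE.
Qed.
Section CoreGen.
Variable Y : {vspace E}.
Local Notation al := (PhiL (vbasis Y)).
Local Notation Yp := (perpv (vbasis Y)).

Definition Hpair (W : {vspace E}) := forall e, exists2 x, x \in W & e - x \in Yp.

Lemma Yp_w v y : v \in Yp -> y \in Y -> w v y = 0.
Proof. by move/perpvP => h hy; apply: h; rewrite (span_basis (vbasisP Y)). Qed.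

Lemma key_in_Pv W : iso W -> Hpair W -> forall v, v \in W -> v \in (Y + Pv)%VS -> v \in Pv.
Proof.
move=> [iW _] hW v hv /memv_addP [y hy [p hp def_v]].
have yP : y \in Pv.
  apply/PvP' => e; have [x hx hex] := hW e.
  rewrite -(subrK x e) wAl (Yp_w hex hy) add0r.
  have -> : y = v - p by rewrite def_v addrK.
  by rewrite wBr (iW _ _ hx hv) (PvP' p hp) subrr.
by rewrite def_v; apply: memvD.
Qed.

Lemma img_full W : Hpair W -> (al @: W)%VS = limg al.
Proof.
move=> hW; apply/eqP; rewrite eqEsubv limgS ?subvf //=; apply/subvP => r /memv_imgP [e _ ->].
have [x hx hex] := hW e; apply/memv_imgP; exists x => //.
by apply/eqP; rewrite -subr_eq0 -linearB /= -memv_ker.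
Qed.

Lemma img_M W : Hpair W -> (al @: (W :\: Yp))%VS = limg al.
Proof.
move=> hW; rewrite -(img_full hW) -{2}(addv_diff_cap W Yp) limgD.
have /eqP -> : (al @: (W :&: Yp) == 0)%VS by rewrite -lkerE capvSr.
by rewrite addv0.
Qed.

Lemma dim_M W : Hpair W -> \dim (W :\: Yp) = \dim (limg al).
Proof. by move=> hW; rewrite -(img_M hW) limg_dim_eq // capv_diff. Qed.

Lemma dim_img_le (rT : vectType K) (f : 'Hom(E, rT)) U : (\dim (f @: U) <= \dim U)%N.
Proof. by rewrite -(limg_ker_dim f U) leq_addl. Qed.


Lemma lift_list (M1 M2 : {vspace E}) : (al @: M1 = al @: M2)%VS ->
  forall L, (<<L>> <= M1)%VS -> exists2 L', (<<L'>> <= M2)%VS & map al L' = map al L.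
Proof.
move=> hM; elim=> [|l L IH] hL; first by exists [::]; rewrite ?span_nil ?sub0v.
move: hL; rewrite span_cons subv_add => /andP [hl hL].
have [L' hL' eL'] := IH hL.
have : al l \in (al @: M2)%VS by rewrite -hM; apply: memv_img.
move=> /memv_imgP [m hm em].
by exists (m :: L'); rewrite ?span_cons ?subv_add ?hL' ?andbT //= eL' em.
Qed.

Lemma free_lift (M1 : {vspace E}) L L' : free L -> (<<L>> <= M1)%VS -> (M1 :&: Yp = 0)%VS ->
  map al L' = map al L -> free L'.
Proof.
move=> hf hL hM e.
have sz : size L' = size L by rewrite -(size_map al) e size_map.
rewrite /free eqn_leq dim_span /= sz -(eqP hf).
have : \dim <<L>> = \dim (al @: <<L>>).
  rewrite limg_dim_eq //; apply/eqP; rewrite -subv0 -hM; apply: capvS => //.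
move=> ->; rewrite limg_span -e -limg_span; exact: dim_img_le.
Qed.

Lemma Pv_Yp : (Pv <= Yp)%VS.
Proof. by apply/subvP => p /PvP hp; apply/perpvP => s _; apply: hp. Qed.

End CoreGen.
Lemma inrad_of (W : {vspace E}) v : iso W -> v \in W -> v \in Pv -> in_rad sigma eps Lam q v.
Proof. by move=> [_ h] hv hp; split; [apply/PvP' | apply: h]. Qed.

Lemma cap_gen Y (W M K' : {vspace E}) :
  (M :&: perpv (vbasis Y) = 0)%VS -> (K' <= perpv (vbasis Y))%VS -> (K' :&: Pv = 0)%VS ->
  (M + K' <= W)%VS -> (forall v, v \in W -> v \in (Y + Pv)%VS -> v \in Pv) ->
  ((M + K') :&: (Y + Pv) = 0)%VS.
Proof.
move=> hM hK hKP hW key; apply/eqP; rewrite -subv0; apply/subvP => v.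
rewrite memv_cap => /andP [hv hvY].
have vP : v \in Pv by apply: key => //; apply: (subvP hW).
move: hv => /memv_addP [m hm [k hk def_v]].
have mY : m \in perpv (vbasis Y).
  have -> : m = v - k by rewrite def_v addrK.
  by apply: memvB; [apply: (subvP (Pv_Yp Y)) | apply: (subvP hK)].
have m0 : m = 0 by apply/eqP; rewrite -memv0 -hM memv_cap hm mY.
have : k \in (K' :&: Pv)%VS by rewrite memv_cap hk -[k]add0r -m0 -def_v vP.
by rewrite hKP def_v m0 add0r.
Qed.
Theorem core (Y W1 W2 : {vspace E}) :
  iso W1 -> iso W2 -> \dim W1 = \dim W2 ->
  (forall v, in_rad sigma eps Lam q v -> v \in W1) ->
  (forall v, in_rad sigma eps Lam q v -> v \in W2) ->
  Hpair Y W1 -> Hpair Y W2 ->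
  exists h, [/\ Giso h, fixes h Y & (h @: W1)%VS = W2].
Proof.
move=> iW1 iW2 dW r1 r2 H1 H2.
set Yp := perpv (vbasis Y); set al := PhiL (vbasis Y).
set R := (W1 :&: Pv)%VS.
have R2 : (W2 :&: Pv)%VS = R.
  apply/vspaceP => v; rewrite !memv_cap; apply/andP/andP => [] [hv hp]; split => //.
    by apply: r1; apply: (inrad_of iW2).
  by apply: r2; apply: (inrad_of iW1).
have PY : (Yp :&: Pv)%VS = Pv by apply/capv_idPr; apply: Pv_Yp.
set M1 := (W1 :\: Yp)%VS; set M2 := (W2 :\: Yp)%VS.
set K1 := (W1 :&: Yp)%VS; set K2 := (W2 :&: Yp)%VS.
set K1' := (K1 :\: Pv)%VS; set K2' := (K2 :\: Pv)%VS.
have K1P : (K1 :&: Pv)%VS = R by rewrite /K1 -capvA PY.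
have K2P : (K2 :&: Pv)%VS = R by rewrite /K2 -capvA PY R2.
have dM : \dim M1 = \dim M2 by rewrite (dim_M H1) (dim_M H2).
have dK : \dim K1 = \dim K2.
  have e1 := dimv_cap_compl W1 Yp; have e2 := dimv_cap_compl W2 Yp.
  by apply/eqP; rewrite -(eqn_add2r (\dim M1)) {2}dM /K1 /M1 e1 /K2 /M2 e2 dW.
have dK' : \dim K1' = \dim K2'.
  have e1 := dimv_cap_compl K1 Pv; have e2 := dimv_cap_compl K2 Pv.
  by apply/eqP; rewrite -(eqn_add2l (\dim R)) -{1}K1P e1 -K2P e2 dK.
have hM : (al @: M1 = al @: M2)%VS by rewrite (img_M H1) (img_M H2).
set L := (vbasis M1 : seq E).
have hLM : (<<L>> = M1)%VS by apply: span_basis (vbasisP M1).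
have sL : (<<L>> <= M1)%VS by rewrite hLM subvv.
have [L' hL' eL'] := lift_list hM sL.
set xs := L ++ vbasis K1'; set ys := L' ++ vbasis K2'.
have szL' : size L' = size L by rewrite -(size_map al) eL' size_map.
have hK1'Yp : (K1' <= Yp)%VS := subv_trans (diffvSl K1 Pv) (capvSr W1 Yp).
have hK2'Yp : (K2' <= Yp)%VS := subv_trans (diffvSl K2 Pv) (capvSr W2 Yp).
have hK1'W : (K1' <= W1)%VS := subv_trans (diffvSl K1 Pv) (capvSl W1 Yp).
have hK2'W : (K2' <= W2)%VS := subv_trans (diffvSl K2 Pv) (capvSl W2 Yp).
have hM1Yp : (M1 :&: Yp = 0)%VS := capv_diff W1 Yp.
have hM2Yp : (M2 :&: Yp = 0)%VS := capv_diff W2 Yp.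
have hM1W : (M1 <= W1)%VS := diffvSl W1 Yp.
have hM2W : (M2 <= W2)%VS := diffvSl W2 Yp.
have hK1'P : (K1' :&: Pv = 0)%VS := capv_diff K1 Pv.
have hK2'P : (K2' :&: Pv = 0)%VS := capv_diff K2 Pv.
have fL' : free L' := free_lift (basis_free (vbasisP M1)) sL hM1Yp eL'.
have eL'M : (<<L'>> = M2)%VS.
  apply/eqP; rewrite eqEdim hL' /= (eqP fL') szL' /L size_tuple dM leqnn //.
have sxs : (<<xs>> = M1 + K1')%VS by rewrite span_cat hLM (span_basis (vbasisP K1')).
have sys : (<<ys>> = M2 + K2')%VS by rewrite span_cat eL'M (span_basis (vbasisP K2')).
have RP : (R <= Pv)%VS by apply: capvSr.
have YRP : (Y + R + Pv = Y + Pv)%VS by rewrite -addvA (addv_idPr RP).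
have nth_span (s0 : seq E) j : nth 0 s0 j \in <<s0>>%VS.
  case: (ltnP j (size s0)) => hj; first by apply: memv_span; apply: mem_nth.
  by rewrite nth_default // mem0v.
have hd : forall i, nth 0 xs i - nth 0 ys i \in Yp.
  move=> i; rewrite /xs /ys !nth_cat szL'; case: ltnP => hiL.
    have := congr1 (fun s0 => nth 0 s0 i) eL'; rewrite /= !(nth_map 0) ?szL' // => e.
    by rewrite /Yp /perpv memv_ker linearB /= e subrr.
  apply: memvB.
    by apply: (subvP hK1'Yp); move: (nth_span (vbasis K1') (i - size L)%N); rewrite (span_basis (vbasisP K1')).
  by apply: (subvP hK2'Yp); move: (nth_span (vbasis K2') (i - size L)%N); rewrite (span_basis (vbasisP K2')).
have [h [gh fh eh]] : exists h, [/\ Giso h, fixes h (Y + R)%VS & map h xs = ys].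
  apply: (@ext_seq (size xs)) => //.
  - by rewrite /xs /ys !size_cat szL' !size_tuple dK'.
  - by apply: (iso_sub iW1); rewrite sxs subv_add hM1W hK1'W.
  - by apply: (iso_sub iW2); rewrite sys subv_add hM2W hK2'W.
  - move=> i hi y0 /memv_addP [y hy [r hr ->]].
    have rP : r \in Pv by apply: (subvP RP).
    rewrite !wAl !(PvP r rP) !addr0.
    apply/eqP; rewrite -subr_eq0 -wBr; apply/eqP; apply: wC0; exact: Yp_w (hd i) hy.
  - rewrite cat_free (basis_free (vbasisP M1)) (basis_free (vbasisP K1')) /=.
    rewrite hLM (span_basis (vbasisP K1')); apply/directv_addP.
    by apply/eqP; rewrite -subv0 -hM1Yp; apply: capvS.
  - rewrite YRP sxs; apply: (cap_gen hM1Yp hK1'Yp hK1'P); last exact: key_in_Pv iW1 H1.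
    by rewrite subv_add hM1W hK1'W.
  - rewrite cat_free fL' (basis_free (vbasisP K2')) /=.
    rewrite eL'M (span_basis (vbasisP K2')); apply/directv_addP.
    by apply/eqP; rewrite -subv0 -hM2Yp; apply: capvS.
  - rewrite YRP sys; apply: (cap_gen hM2Yp hK2'Yp hK2'P); last exact: key_in_Pv iW2 H2.
    by rewrite subv_add hM2W hK2'W.
exists h; split => //.
  by move=> y hy; apply: fh; apply: (subvP (addvSl _ _)).
have eW1 : W1 = (<<xs>> + R)%VS.
  by rewrite sxs -addvA -K1P addv_diff_cap addv_diff_cap.
have eW2 : W2 = (<<ys>> + R)%VS.
  by rewrite sys -addvA -K2P addv_diff_cap addv_diff_cap.
have fR : fixes h R by move=> r hr; apply: fh; apply: (subvP (addvSr _ _)).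
by rewrite {1}eW1 eW2 limgD limg_span eh fixes_limg.
Qed.
Section Lin.
Variable V : vectType K.

Lemma inj_bijV (f : 'End(V)) : injective f -> bijective f.
Proof.
move=> /lker0P k; exists (f^-1)%VF; [exact: lker0_lfunK | exact: lker0_lfunVK].
Qed.

Lemma ext_basis (X Y : seq V) : basis_of fullv X -> basis_of fullv Y -> size X = size Y ->
  exists g : 'End(V), bijective g /\ map g X = Y.
Proof.
move=> bX bY sXY.
have [f hf] := linear_of_free X Y.
have eX : map f X = Y by apply: hf; [exact: basis_free bX | by rewrite sXY].
exists (linfun f); split; last by rewrite -eX; apply: eq_map => v; rewrite lfunE.
apply: inj_bijV; apply/lker0P.
have hl : limg (linfun f) = fullv.
  apply/eqP; rewrite eqEsubv subvf /= -{1}(span_basis bY); apply/span_subvP => y.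
  by rewrite -eX => /mapP [x _ ->]; rewrite -lfunE; apply: memv_img; apply: memvf.
have := limg_ker_dim (linfun f) fullv; rewrite hl capfv => /eqP.
by rewrite -[X in _ == X]add0n eqn_add2r dimv_eq0.
Qed.

Lemma compl_basis (W : {vspace V}) : basis_of fullv (vbasis W ++ vbasis (W^C)%VS).
Proof.
rewrite -(addv_complf W); apply: cat_basis; [apply/directv_addP; exact: capv_compl | exact: vbasisP | exact: vbasisP].
Qed.

Lemma part1 (W1 W2 : {vspace V}) : \dim W1 = \dim W2 ->
  exists g : 'End(V), GLmem g /\ (g @: W1)%VS = W2.
Proof.
move=> dW.
have [g [bg eg]] := ext_basis (compl_basis W1) (compl_basis W2)
  ltac:(by rewrite !size_cat !size_tuple !dimv_compl dW).
exists g; split => //.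
move: eg; rewrite map_cat => /eqP; rewrite eqseq_cat ?size_map ?size_tuple // => /andP [/eqP e _].
by rewrite -(span_basis (vbasisP W1)) limg_span e (span_basis (vbasisP W2)).
Qed.
Lemma part2 (V0 W1 W2 : {vspace V}) : (W1 + V0)%VS = fullv -> (W2 + V0)%VS = fullv ->
  \dim W1 = \dim W2 -> exists g : 'End(V), ATmem V0 g /\ (g @: W1)%VS = W2.
Proof.
move=> h1 h2 dW.
set A1 := vbasis (V0 :&: W1); set B1 := vbasis (V0 :\: W1); set C1 := vbasis (W1 :\: V0).
set A2 := vbasis (V0 :&: W2); set B2 := vbasis (V0 :\: W2).
set C2 := (W2 :\: V0)%VS.
set pi := daddv_pi C2 V0.
have C2V0 : (C2 :&: V0 = 0)%VS by apply: capv_diff.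
have full2 : (C2 + V0)%VS = fullv by rewrite /C2 addv_diff.
have pi_in v : pi v \in C2 by apply: memv_pi.
have pi_diff v : pi v - v \in V0.
  have := daddv_pi_add (w := v) C2V0; rewrite full2 memvf => /(_ isT) e.
  by rewrite -{2}e opprD addrA subrr add0r memvN; apply: memv_pi.
have dA : \dim (V0 :&: W1) = \dim (V0 :&: W2).
  have e1 := dimv_sum_cap V0 W1; have e2 := dimv_sum_cap V0 W2.
  rewrite addvC h1 in e1; rewrite addvC h2 in e2.
  by apply/eqP; rewrite -(eqn_add2l (\dim (fullv : {vspace V}))) e1 e2 dW.
have dB : \dim (V0 :\: W1) = \dim (V0 :\: W2).
  have e1 := dimv_cap_compl V0 W1; have e2 := dimv_cap_compl V0 W2.
  by apply/eqP; rewrite -(eqn_add2l (\dim (V0 :&: W1))) e1 {1}dA e2.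
have bV0 W : basis_of V0 (vbasis (V0 :&: W) ++ vbasis (V0 :\: W)).
  rewrite -{1}(addv_diff_cap V0 W) addvC; apply: cat_basis; last 2 first.
  - exact: vbasisP.
  - exact: vbasisP.
  apply/directv_addP; apply/eqP; rewrite -subv0 -(capv_diff V0 W) capvC.
  by apply: capvS => //; apply: capvSr.
have bfull W : (W + V0)%VS = fullv -> basis_of fullv ((vbasis (V0 :&: W) ++ vbasis (V0 :\: W)) ++ vbasis (W :\: V0)).
  move=> hW; rewrite -hW -addv_diff addvC; apply: cat_basis; last 2 first.
  - exact: bV0.
  - exact: vbasisP.
  by apply/directv_addP; rewrite capvC capv_diff.
have dC : \dim (W1 :\: V0) = \dim C2.
  have e1 := dimv_cap_compl W1 V0; have e2 := dimv_cap_compl W2 V0.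
  rewrite capvC in e1; rewrite capvC in e2.
  by apply/eqP; rewrite -(eqn_add2l (\dim (V0 :&: W1))) e1 {1}dA e2 dW.
have kpi : ((W1 :\: V0) :&: lker pi = 0)%VS.
  apply/eqP; rewrite -subv0 -(capv_diff W1 V0); apply/subvP => v.
  rewrite !memv_cap memv_ker => /andP [-> /eqP hv] /=.
  by have := pi_diff v; rewrite hv sub0r memvN.
have bC2 : basis_of C2 (map pi C1).
  rewrite basisEfree size_map size_tuple -dC leqnn andbT; apply/andP; split.
    rewrite /free -limg_span limg_dim_eq (span_basis (vbasisP _)) //.
    by rewrite size_map size_tuple.
  by apply/span_subvP => y /mapP [x _ ->].
have bX := bfull W1 h1.
have bY : basis_of fullv ((A2 ++ B2) ++ map pi C1).
  rewrite -full2 addvC; apply: cat_basis; [apply/directv_addP; by rewrite capvC | exact: bV0 | exact: bC2].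
have [g [bg eg]] := ext_basis bX bY
  ltac:(by rewrite !size_cat size_map !size_tuple dA dB).
move: eg; rewrite !map_cat => /eqP; rewrite eqseq_cat ?size_cat ?size_map ?size_tuple ?dA ?dB //.
move=> /andP [/eqP eAB /eqP eC].
have /eqP := eAB; rewrite eqseq_cat ?size_map ?size_tuple ?dA // => /andP [/eqP eA _].
exists g; split; last first.
  rewrite -(addv_diff_cap W1 V0) capvC -(span_basis (vbasisP (W1 :\: V0))).
  rewrite -(span_basis (vbasisP (V0 :&: W1))) limgD !limg_span -/A1 -/C1 eA eC.
  by rewrite (span_basis bC2) (span_basis (vbasisP _)) capvC addv_diff_cap.
split => // v.
set D := (g - \1)%VF.
have hD : (limg D <= V0)%VS.
  rewrite -(span_basis bX) limg_span; apply/span_subvP => y /mapP [x hx ->].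
  rewrite /D add_lfunE opp_lfunE id_lfunE.
  move: hx; rewrite mem_cat => /orP [hx|hx].
    apply: memvB; last exact: (basis_mem (bV0 W1)).
    apply: (basis_mem (bV0 W2)); rewrite -eAB -map_cat; exact: map_f.
  have := (iffRL (eq_in_map g pi C1) eC) x hx; rewrite /= => ->; exact: pi_diff.
have : D v \in V0 by apply: (subvP hD); apply: memv_img; apply: memvf.
by rewrite /D add_lfunE opp_lfunE id_lfunE.
Qed.
End Lin.
Lemma part3 (W1 W2 : {vspace E}) :
  Pw sigma eps Lam q W1 -> Pw sigma eps Lam q W2 -> \dim W1 = \dim W2 ->
  exists g : 'End(E), Gmem sigma eps Lam q g /\ (g @: W1)%VS = W2.
Proof.
case=> iW1 r1 _ _; case=> iW2 r2 _ _ dW.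
have H W : Hpair 0%VS W.
  move=> e; exists 0; first exact: mem0v.
  rewrite subr0; apply/perpvP => s; rewrite (span_basis (vbasisP 0%VS)) memv0 => /eqP ->.
  exact: w0r.
have [h [gh _ eh]] := core iW1 iW2 dW r1 r2 (H W1) (H W2).
by exists h.
Qed.

Lemma part4 (U W1 W2 : {vspace E}) :
  PwU sigma eps Lam q U W1 -> PwU sigma eps Lam q U W2 -> \dim W1 = \dim W2 ->
  exists g : 'End(E), AEUmem sigma eps Lam q U g /\ (g @: W1)%VS = W2.
Proof.
case=> [[iW1 r1 _ _] p1]; case=> [[iW2 r2 _ _] p2] dW.
have H (W : {vspace E}) : (forall e, exists x u, [/\ x \in W, in_perp sigma eps q U u & e = x + u]) -> Hpair U W.
  move=> hW e; have [x [u [hx hu ->]]] := hW e; exists x => //.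
  rewrite addrAC subrr add0r; apply/perpvP => s; rewrite (span_basis (vbasisP U)); exact: hu.
have [h [gh fh eh]] := core iW1 iW2 dW r1 r2 (H W1 p1) (H W2 p2).
by exists h.
Qed.
End FormBasics.
Unset Implicit Arguments.

Theorem proposition5p4 (K : fieldType) :
  (* GL(V) on P(V) *)
  (forall (V : vectType K) (W1 W2 : {vspace V}),
     PV W1 -> PV W2 -> \dim W1 = \dim W2 ->
     exists g : 'End(V), GLmem g /\ (g @: W1)%VS = W2) /\
  (* A^T(V,V0) on P(V,V0) *)
  (forall (V : vectType K) (V0 W1 W2 : {vspace V}),
     PVV0 V0 W1 -> PVV0 V0 W2 -> \dim W1 = \dim W2 ->
     exists g : 'End(V), ATmem V0 g /\ (g @: W1)%VS = W2) /\
  (* G(E) on P^omega(E) *)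
  (forall (sigma : {rmorphism K -> K}) (eps : K) (Lam : K -> Prop)
          (E : vectType K) (q : E -> E -> K) (W1 W2 : {vspace E}),
     form_param sigma eps Lam -> sesquilinear sigma q ->
     Pw sigma eps Lam q W1 -> Pw sigma eps Lam q W2 -> \dim W1 = \dim W2 ->
     exists g : 'End(E), Gmem sigma eps Lam q g /\ (g @: W1)%VS = W2) /\
  (* A(E,U) on P^omega(E,U), for U in P^omega(E) *)
  (forall (sigma : {rmorphism K -> K}) (eps : K) (Lam : K -> Prop)
          (E : vectType K) (q : E -> E -> K) (U W1 W2 : {vspace E}),
     form_param sigma eps Lam -> sesquilinear sigma q ->
     Pw sigma eps Lam q U ->
     PwU sigma eps Lam q U W1 -> PwU sigma eps Lam q U W2 -> \dim W1 = \dim W2 ->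
     exists g : 'End(E), AEUmem sigma eps Lam q U g /\ (g @: W1)%VS = W2).
Proof.
split; first by move=> V W1 W2 _ _ dW; exact: part1.
split; first by move=> V V0 W1 W2 [_ h1] [_ h2] dW; exact: part2.
split.
  move=> sigma eps Lam E q W1 W2 fp sq h1 h2 dW; exact: part3.
move=> sigma eps Lam E q U W1 W2 fp sq _ h1 h2 dW; exact: part4.
Qed.
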